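(* Let $f:X\to Y$ be a continuous map between $T_0$-spaces. Then $f$ is locally closed if and only if the frame morphism $\Omega f=f^{-1}:\Omega Y\to\Omega X$ is a D-morphism.
   Context: $\Omega X$ is the frame of open sets of a space $X$. A point $x\in X$ is locally closed if $\{x\}$ is closed in some open neighborhood of $x$. A continuous map is locally closed if it maps locally closed points to locally closed points. For a frame $L$ and elements $a<b$, $a\lessdot b$ means there is no $x$ with $a<x<b$. A filter $F$ of a frame $L$ is slicing if it is prime and there exist $b\in F$, $a\notin F$ with $a\lessdot b$. A frame morphism $h:L\to M$ is a D-morphism if $h^{-1}(F)$ is a slicing filter of $L$ for every slicing filter $F$ of $M$. *)

(* Defs.v *)
From HB Require Import structures.
From mathcomp Require Import all_boot all_order.
From mathcomp Require Import boolp classical_sets functions topology.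
Set Implicit Arguments. Unset Strict Implicit. Unset Printing Implicit Defensive.
Local Open Scope classical_set_scope.

(* The frame Omega X of a space X is represented by the family [open] of open
   subsets of X, ordered by inclusion: meet = intersection, join = union,
   top = setT, bottom = set0.  A subset of Omega X is a [set (set X)] all of
   whose members are open. *)

Section Frames.
Variable X : topologicalType.

(* {x} is closed in some open neighbourhood U of x (subspace topology:
   the closed sets of U are the U `&` C with C closed in X). *)
Definition locally_closed_point (x : X) : Prop :=
  exists U : set X, open U /\ U x /\
    exists C : set X, closed C /\ U `&` C = [set x].

Definition covered_by (a b : set X) : Prop :=
  open a /\ open b /\ a `<` b /\
  ~ (exists c : set X, open c /\ a `<` c /\ c `<` b).

Definition frame_filter (F : set (set X)) : Prop :=
  F `<=` open /\ F setT /\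
  (forall a b : set X, open b -> F a -> a `<=` b -> F b) /\
  (forall a b : set X, F a -> F b -> F (a `&` b)).

Definition prime_filter (F : set (set X)) : Prop :=
  frame_filter F /\ ~ F set0 /\
  (forall a b : set X, open a -> open b -> F (a `|` b) -> F a \/ F b).

Definition slicing_filter (F : set (set X)) : Prop :=
  prime_filter F /\
  exists a b : set X, F b /\ ~ F a /\ covered_by a b.

End Frames.

Definition locally_closed_map (X Y : topologicalType) (f : X -> Y) : Prop :=
  forall x : X, locally_closed_point x -> locally_closed_point (f x).

(* Omega f = f^{-1} : Omega Y -> Omega X, and the preimage of a family F of
   opens of X under it is { V open in Y | f^{-1}(V) in F }. *)
Definition Omega_preimage (X Y : topologicalType) (f : X -> Y)
  (F : set (set X)) : set (set Y) :=
  [set V : set Y | open V /\ F (f @^-1` V)].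

Definition D_morphism (X Y : topologicalType) (f : X -> Y) : Prop :=
  forall F : set (set X), slicing_filter F ->
    slicing_filter (Omega_preimage f F).

(* Main.v *)
Require Import Defs.
From mathcomp Require Import all_boot all_order.
From mathcomp Require Import boolp classical_sets functions topology.
Set Implicit Arguments. Unset Strict Implicit. Unset Printing Implicit Defensive.
Local Open Scope classical_set_scope.

Definition Nb (X : topologicalType) (x : X) : set (set X) :=
  [set V | open V /\ V x].

Lemma T0_open (X : topologicalType) (hX : kolmogorov_space X) (x y : X) :
  x <> y -> exists W : set X, open W /\ ((W x /\ ~ W y) \/ (W y /\ ~ W x)).
Proof.
move=> /eqP /hX [A [[/set_mem nA /set_mem yA]|[/set_mem nA /set_mem yA]]].
- move: nA; rewrite nbhsE => -[B [oB Bx] BA]; exists B; split=> //.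
  by left; split=> // /BA.
- move: nA; rewrite nbhsE => -[B [oB Bx] BA]; exists B; split=> //.
  by right; split=> // /BA.
Qed.

Lemma slicing_point (X : topologicalType) (hX : kolmogorov_space X)
  (F : set (set X)) : slicing_filter F ->
  exists z, locally_closed_point z /\ forall V, F V <-> (open V /\ V z).
Proof.
move=> [[[Fo [FT [Fup FI]]] [F0 Fpr]] [a [b [Fb [Fa [oa [ob [[ab nba] nc]]]]]]]].
have [z [bz naz]] : exists z, b z /\ ~ a z.
  apply: contrapT => H; apply: nba => w bw; apply: contrapT => aw.
  by apply: H; exists w.
have uniq : forall y, b y -> ~ a y -> y = z.
  move=> y By Ay; apply: contrapT => yz.
  have [W [oW HW]] := T0_open hX yz.
  apply: nc; exists (a `|` (W `&` b)); split; first by apply: openU => //; apply: openI.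
  case: HW => [[Wy Wz]|[Wz Wy]].
  - split; split.
    + by move=> w aw; left.
    + by move=> H; apply: Ay; apply: H; right.
    + by move=> w [/ab|[]].
    + by move=> H; case: (H z bz) => // -[].
  - split; split.
    + by move=> w aw; left.
    + by move=> H; apply: naz; apply: H; right.
    + by move=> w [/ab|[]].
    + by move=> H; case: (H y By) => // -[].
have Fz : forall V, F V <-> (open V /\ V z).
  move=> V; split.
  - move=> FV; split; first exact: Fo.
    apply: contrapT => nVz; apply: Fa; apply: (Fup (V `&` b)) => //.
      by apply: FI.
    move=> w [Vw bw]; apply: contrapT => aw.
    by move: Vw; rewrite (uniq w bw aw).
  - move=> [oV Vz].
    have : F (a `|` (V `&` b)).
      apply: (Fup b) => //; first by apply: openU => //; apply: openI.
      move=> w bw; have [aw|aw] := pselect (a w); first by left.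
      by right; split => //; rewrite (uniq w bw aw).
    case/Fpr => //; first by apply: openI.
    by move=> FVb; apply: (Fup (V `&` b)) => // w [].
exists z; split=> //.
exists b; split=> //; split=> //.
exists (~` a); split; first exact: open_closedC.
apply/seteqP; split=> w.
- by move=> [bw aw]; rewrite /= (uniq w bw aw).
- by move=> /= ->.
Qed.

Lemma point_slicing (X : topologicalType) (x : X) :
  locally_closed_point x -> slicing_filter (Nb x).
Proof.
move=> [U [oU [Ux [C [cC UC]]]]].
have UCx : forall w, U w -> C w -> w = x.
  by move=> w Uw Cw; have : (U `&` C) w by []; rewrite UC.
have Cx : C x by have : [set x] x by []; rewrite -UC => -[].
split.
  split.
    split; first by move=> V [].
    split; first by split=> //; exact: openT.
    split; first by move=> A B oB [_ Ax] AB; split=> //; apply: AB.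
    by move=> A B [oA Ax] [oB Bx]; split; [apply: openI|].
  split; first by move=> [].
  by move=> A B oA oB [_ [Ax|Bx]]; [left|right].
exists (U `&` ~` C), U; split; first by [].
split; first by move=> [_ []].
split; first by apply: openI => //; apply: closed_openC.
split; first by [].
split.
  split; first by move=> w [].
  by move=> H; case: (H x Ux).
move=> [c [oc [[ac nca] [cb nbc]]]].
have [w [cw naw]] : exists w, c w /\ ~ (U `&` ~` C) w.
  apply: contrapT => H; apply: nca => w cw; apply: contrapT => aw.
  by apply: H; exists w.
have Uw := cb w cw.
have Cw : C w by apply: contrapT => nCw; apply: naw.
have wx := UCx w Uw Cw; subst w.
apply: nbc => u Uu; have [Cu|nCu] := pselect (C u).
  by rewrite (UCx u Uu Cu).
by apply: ac.
Qed.

Lemma preimage_Nb (X Y : topologicalType) (f : X -> Y) (hf : continuous f)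
  (x : X) : Omega_preimage f (Nb x) = Nb (f x).
Proof.
apply/seteqP; split=> V /=.
- by move=> [oV [_ Vx]].
- by move=> [oV Vx]; split=> //; split=> //; apply: (proj1 (continuousP f) hf).
Qed.

Theorem proposition5p10 (X Y : topologicalType) (f : X -> Y)
  (hX : kolmogorov_space X) (hY : kolmogorov_space Y)
  (hf : continuous f) :
  locally_closed_map f <-> D_morphism f.
Proof.
split.
- move=> lcf F /(slicing_point hX) [z [lz Hz]].
  have -> : F = Nb z by apply/seteqP; split=> V /Hz.
  rewrite preimage_Nb //; apply: point_slicing; exact: lcf.
- move=> Df x lx.
  have := Df _ (point_slicing lx); rewrite preimage_Nb //.
  move=> /(slicing_point hY) [z [lz Hz]].
  suff -> : f x = z by [].
  apply: contrapT => fxz.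
  have [W [oW [[Wf Wz]|[Wz Wf]]]] := T0_open hY fxz.
  + by apply: Wz; apply: (proj2 (proj1 (Hz W) (conj oW Wf))).
  + by apply: Wf; case: (proj2 (Hz W) (conj oW Wz)).
Qed.
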